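(* Let $\Lambda = K\Gamma/I$ be a finite dimensional path algebra modulo an admissible ideal $I$ over a field $K$, with Jacobson radical $J$, and let $\mathcal{A}$ be a full subcategory of $\Lambda\text{-mod}$. Let $r\ge 1$, let $e(1),\dots,e(r)$ be vertices of $\Gamma$, and let $p_1,\dots,p_r,q_1,\dots,q_r$ be $2r$ paths of positive length in $K\Gamma$, none of which is a subpath of any of the others, such that for each $i$ the paths $p_i$ and $q_i$ have a common starting vertex $e(i)'$, $p_i$ ends in $e(i)$, and $q_i$ ends in $e(i+1)$ (where $e(r+1):=e(1)$). For an integer $j\ge1$ let $s(j)\in\{1,\dots,r\}$ with $j\equiv s(j)\pmod r$. Suppose the following two conditions hold. (1) For each natural number $n$ there is a module $M_n\in\mathcal{A}$ generated by top elements $x_{n,1},\dots,x_{n,nr}$ which are $K$-linearly independent modulo $JM_n$, such that: $x_{n,j}=e(s(j))'x_{n,j}$ for all $j$; $q_{s(j)}x_{n,j}=p_{s(j+1)}x_{n,j+1}$ for $1\le j<nr$; the elements $p_{s(1)}x_{n,1}$ and $q_{s(j)}x_{n,j}$ ($1\le j< nr$) are $K$-linearly independent elements of $\operatorname{Soc}M_n$; and the only paths of $K\Gamma$ not annihilating $x_{n,j}$ are the right subpaths of $p_{s(j)}$ and $q_{s(j)}$ when $j<nr$, and the right subpaths of $p_{s(nr)}$ when $j=nr$. (2) Every module $A\in\mathcal{A}$ satisfies: (i) $e(1)(\operatorname{Soc}A)\subseteq p_1A$; (ii) $q_iA\cap\operatorname{Soc}A\subseteq p_{i+1}A$ for $1\le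 i<r$, and $q_rA\cap\operatorname{Soc}A\subseteq p_1A$; (iii) for every $i$ and every $x\in A$, if $p_ix\in\operatorname{Soc}A$ then $q_ix\in\operatorname{Soc}A$. Then the simple module $S=\Lambda e(1)/Je(1)$ has no left $\mathcal{A}$-approximation.
   Context: Vertices of $\Gamma$ are identified with the corresponding primitive idempotents of $\Lambda$; paths act on modules through their images in $\Lambda$. Paths are composed right to left: $pq$ means first $q$ then $p$. A path $q$ is a subpath of $p$ if $p=p_2qp_1$ for paths $p_1,p_2$, and a right subpath if $p=p_2q$. A top element of a module $M$ is an element $x\in M\setminus JM$ with $ex=x$ for some vertex $e$. A left $\mathcal{A}$-approximation of a module $M$ is a homomorphism $f:M\to A$ with $A\in\mathcal{A}$ such that every homomorphism $M\to B$ with $B\in\mathcal{A}$ factors through $f$. *)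

(* Defs.v *)
From HB Require Import structures.
From mathcomp Require Import all_boot all_order all_algebra.
Set Implicit Arguments. Unset Strict Implicit. Unset Printing Implicit Defensive.
Import GRing.Theory.
Local Open Scope ring_scope.

(* A path is a pair (start vertex, list of arrows in traversal order);
   it is a genuine path of Gamma when [valid] holds.  The trivial path at v is
   (v, [::]).  Paths compose right to left: pcomp p q = pq = first q then p. *)
Section Quiver.
Variables (V A : finType) (src tgt : A -> V).

Definition qpath := (V * seq A)%type.

Fixpoint valid_from (v : V) (s : seq A) : bool :=
  if s is a :: s' then (src a == v) && valid_from (tgt a) s' else true.
Definition valid (p : qpath) : bool := valid_from p.1 p.2.
Definition psrc (p : qpath) : V := p.1.
Definition ptgt (p : qpath) : V := last p.1 [seq tgt a | a <- p.2].
Definition plen (p : qpath) : nat := size p.2.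
Definition pcomp (p q : qpath) : qpath := (q.1, q.2 ++ p.2).

Definition subpath (q p : qpath) : Prop :=
  exists p1 p2 : qpath, [/\ valid p1, valid p2, ptgt p1 = psrc q,
    ptgt q = psrc p2 & p = pcomp p2 (pcomp q p1)].
Definition right_subpath (q p : qpath) : Prop :=
  exists p2 : qpath, [/\ valid p2, ptgt q = psrc p2 & p = pcomp p2 q].

(* The path algebra K Gamma: finitely supported K-valued functions on
   (valid) paths, with the convolution product. *)
Variable K : fieldType.

Definition pathalg_elt (f : qpath -> K) : Prop :=
  (forall p, f p != 0 -> valid p) /\ exists s : seq qpath, forall p, f p != 0 -> p \in s.
Definition pdelta (q : qpath) : qpath -> K := fun p => (p == q)%:R.
Definition psplit1 (p : qpath) (k : nat) : qpath := (p.1, take k p.2).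
Definition psplit2 (p : qpath) (k : nat) : qpath := (ptgt (psplit1 p k), drop k p.2).
(* (f * g)(p) = sum over factorizations p = p2 p1 of f(p2) g(p1) *)
Definition mulKG (f g : qpath -> K) : qpath -> K :=
  fun p => \sum_(k < (size p.2).+1) f (psplit2 p k) * g (psplit1 p k).

Definition ideal_KG (I : (qpath -> K) -> Prop) : Prop :=
  [/\ forall f, I f -> pathalg_elt f,
      I (fun _ => 0) /\
      forall f g, I f -> I g -> I (fun p => f p + g p),
      forall c f, I f -> I (fun p => c * f p),
      forall f g, pathalg_elt f -> I g -> I (mulKG f g)
    & forall f g, I f -> pathalg_elt g -> I (mulKG f g)].

(* admissible: R^m <= I <= R^2, R the arrow ideal *)
Definition admissible (I : (qpath -> K) -> Prop) : Prop :=
  [/\ ideal_KG I,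
      forall f, I f -> forall p, f p != 0 -> (2 <= plen p)%N
    & exists m, (2 <= m)%N /\ forall p, valid p -> plen p = m -> I (pdelta p)].

(* A finite-dimensional K-space with actions of the vertex idempotents and
   of the arrows. *)
Record rep := Rep {
  rcar : vectType K;
  reps : V -> 'End(rcar);
  rarr : A -> 'End(rcar) }.

Definition ract (M : rep) (p : qpath) (x : rcar M) : rcar M :=
  foldl (fun y a => rarr M a y) (reps M p.1 x) p.2.

(* M is a (finitely generated = finite dimensional, unital) Lambda-module,
   Lambda = K Gamma / I *)
Definition is_mod (I : (qpath -> K) -> Prop) (M : rep) : Prop :=
  [/\ forall v x, reps M v (reps M v x) = reps M v x,
      forall v w x, v != w -> reps M v (reps M w x) = 0,
      forall x, \sum_(v : V) reps M v x = x,
      forall a x, rarr M a x = reps M (tgt a) (rarr M a (reps M (src a) x))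
    & forall f, I f -> forall s : seq qpath, uniq s ->
        (forall p, f p != 0 -> p \in s) ->
        forall x, \sum_(p <- s) f p *: @ract M p x = 0].

Definition is_hom (M N : rep) (f : 'Hom(rcar M, rcar N)) : Prop :=
  (forall v x, f (reps M v x) = reps N v (f x)) /\
  (forall a x, f (rarr M a x) = rarr N a (f x)).

Definition left_approx (C : rep -> Prop) (M X : rep) (f : 'Hom(rcar M, rcar X)) : Prop :=
  [/\ C X, @is_hom M X f &
      forall B, C B -> forall g : 'Hom(rcar M, rcar B), @is_hom M B g ->
        exists h : 'Hom(rcar X, rcar B), @is_hom X B h /\ forall x, g x = h (f x)].
Definition has_left_approx (C : rep -> Prop) (M : rep) : Prop :=
  exists X (f : 'Hom(rcar M, rcar X)), @left_approx C M X f.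

(* J M (J = R/I for admissible I) and Soc M = {x | J x = 0} *)
Definition radM (M : rep) : {vspace rcar M} := (\sum_(a : A) limg (rarr M a))%VS.
Definition socM (M : rep) : {vspace rcar M} := (\bigcap_(a : A) lker (rarr M a))%VS.

Definition generated_by (M : rep) (X : rcar M -> Prop) : Prop :=
  forall U : {vspace rcar M},
    (forall v, (reps M v @: U <= U)%VS) -> (forall a, (rarr M a @: U <= U)%VS) ->
    (forall x, X x -> x \in U) -> U = fullv.

(* the simple module S = Lambda e / J e at vertex e *)
Definition simple_rep (e : V) : rep :=
  @Rep (K^o) (fun v => if v == e then \1%VF else 0%VF) (fun _ => 0%VF).

End Quiver.

Definition sidx (r j : nat) : nat := ((j.-1) %% r).+1.

(* the family p_1..p_r, q_1..q_r indexed by 1..2r *)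
Definition pq_family (T : Type) (r : nat) (p q : nat -> T) (k : nat) : T :=
  if (k <= r)%N then p k else q (k - r)%N.

Arguments ract {V A K} M p x.
Arguments radM {V A K} M.
Arguments socM {V A K} M.
Arguments generated_by {V A K} M X.

(* Main.v *)
Require Import Defs.
From HB Require Import structures.
From mathcomp Require Import all_boot all_order all_algebra.
From mathcomp Require Import zify.
From Stdlib Require Import Classical.
Import GRing.Theory.
Local Open Scope ring_scope.

Section Gen.
Variables (K : fieldType) (vT : vectType K).

Lemma vspace_of_pred (P : vT -> Prop) :
  P 0 -> (forall a x y, P x -> P y -> P (a *: x + y)) ->
  exists U : {vspace vT}, forall x, x \in U <-> P x.
Proof.
move=> P0 Pc.
suff H : forall k (U : {vspace vT}), (\dim {:vT} - \dim U <= k)%N ->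
   (forall x, x \in U -> P x) -> exists U' : {vspace vT}, forall x, x \in U' <-> P x.
  have h1 : (\dim {:vT} - \dim (0%VS : {vspace vT}) <= \dim {:vT})%N by rewrite leq_subr.
  apply: (H _ _ h1).
  by move=> x; rewrite memv0 => /eqP ->.
elim=> [|k IH] U hk hU; (case: (classic (exists w, P w /\ w \notin U)) =>
  [[w [Pw wU]] | no]); last 1 first.
- exists U => x; split; first exact: hU.
  by move=> Px; case: (boolP (x \in U)) => // xU; exfalso; apply: no; exists x.
- have sU : (U <= U + <[w]>)%VS by apply: addvSl.
  have lt : (\dim U < \dim (U + <[w]>))%N.
    rewrite ltn_neqAle (dimvS sU) andbT.
    rewrite (dimv_leqif_eq sU); apply/eqP => E.
    have : w \in (U + <[w]>)%VS by apply: (subvP (addvSr U _)); exact: memv_line.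
    by rewrite -E (negbTE wU).
  have := dimvS (subvf (U + <[w]>)); lia.
- exists U => x; split; first exact: hU.
  by move=> Px; case: (boolP (x \in U)) => // xU; exfalso; apply: no; exists x.
- have sU : (U <= U + <[w]>)%VS by apply: addvSl.
  have lt : (\dim U < \dim (U + <[w]>))%N.
    rewrite ltn_neqAle (dimvS sU) andbT.
    rewrite (dimv_leqif_eq sU); apply/eqP => E.
    have : w \in (U + <[w]>)%VS by apply: (subvP (addvSr U _)); exact: memv_line.
    by rewrite -E (negbTE wU).
  apply: (IH (U + <[w]>)%VS); first by have := dimvS (subvf (U + <[w]>)); lia.
  move=> x /memv_addP [u uU [v /vlineP [c ->] ->]].
  rewrite addrC; apply: Pc => //; exact: hU.
Qed.
End Gen.
Section Mod.
Variables (V A : finType) (src tgt : A -> V) (K : fieldType).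
Variable (M : rep V A K).
Hypothesis idem : forall v x, reps M v (reps M v x) = reps M v x.
Hypothesis orth : forall v w x, v != w -> reps M v (reps M w x) = 0.
Hypothesis arr : forall a x, rarr M a x = reps M (tgt a) (rarr M a (reps M (src a) x)).

Definition F (s : seq A) (y : rcar M) := foldl (fun y a => rarr M a y) y s.

Lemma F_lin s a y z : F s (a *: y + z) = a *: F s y + F s z.
Proof. by elim: s y z => //= b s IH y z; rewrite /F /= linearP -IH. Qed.

Lemma F0 s : F s 0 = 0.
Proof. by elim: s => //= b s IH; rewrite /F /= linear0. Qed.

Lemma ractE p x : ract M p x = F p.2 (reps M p.1 x).
Proof. by []. Qed.

Lemma ract_lin p a y z : ract M p (a *: y + z) = a *: ract M p y + ract M p z.
Proof. by rewrite !ractE linearP F_lin. Qed.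

Lemma ract0 p : ract M p 0 = 0.
Proof. by rewrite ractE linear0 F0. Qed.

Lemma reps_F s v y : reps M v y = y ->
  reps M (last v [seq tgt a | a <- s]) (F s y) = F s y.
Proof.
elim: s v y => //= a s IH v y _; apply: IH.
by rewrite [in RHS]arr [in LHS]arr idem.
Qed.

Lemma reps_tgt p x : reps M (ptgt tgt p) (ract M p x) = ract M p x.
Proof. by rewrite ractE; apply: reps_F; rewrite idem. Qed.

Lemma reps_other w p x : w != ptgt tgt p -> reps M w (ract M p x) = 0.
Proof. by move=> h; rewrite -reps_tgt orth. Qed.

Lemma ract_comp pi sg w : ptgt tgt sg = psrc pi ->
  ract M pi (ract M sg w) = ract M (Defs.pcomp pi sg) w.
Proof.
move=> h; rewrite [in LHS]ractE -[pi.1]/(psrc pi) -h reps_tgt ractE [in RHS]ractE /Defs.pcomp /=.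
by rewrite /F foldl_cat.
Qed.

Lemma ract_nocomp pi sg w : ptgt tgt sg != psrc pi ->
  ract M pi (ract M sg w) = 0.
Proof. by move=> h; rewrite ractE reps_other 1?eq_sym // F0. Qed.

Lemma rarr_src a w : rarr M a (reps M (src a) w) = rarr M a w.
Proof. by rewrite [in RHS]arr [in LHS]arr idem. Qed.

Lemma rarr_ract a w : rarr M a w = ract M (src a, [:: a]) w.
Proof. by rewrite ractE /= /F /= rarr_src. Qed.

Lemma reps_ract v w : reps M v w = ract M (v, [::]) w.
Proof. by []. Qed.

End Mod.

Section Hom.
Variables (V A : finType) (src tgt : A -> V) (K : fieldType).
Lemma hom_ract (M N : rep V A K) (h : 'Hom(rcar M, rcar N)) p x :
  is_hom h -> h (ract M p x) = ract N p (h x).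
Proof.
move=> [h1 h2]; rewrite !ractE -h1.
elim: p.2 (reps M p.1 x) => //= a s IH y; rewrite /F /= -h2; exact: IH.
Qed.
End Hom.

Section Paths.
Variables (V A : finType) (src tgt : A -> V).
Lemma valid_from_cat v s t : valid_from src tgt v (s ++ t) =
  valid_from src tgt v s && valid_from src tgt (last v [seq tgt a | a <- s]) t.
Proof. by elim: s v => //= a s IH v; rewrite IH andbA. Qed.

Lemma valid_comp pi sg : valid src tgt sg -> valid src tgt pi ->
  ptgt tgt sg = psrc pi -> valid src tgt (Defs.pcomp pi sg).
Proof.
rewrite /valid /Defs.pcomp /= valid_from_cat /ptgt /psrc => -> vpi /= h.
by rewrite h.
Qed.

Lemma ptgt_comp pi sg : (0 < plen pi)%N -> ptgt tgt (Defs.pcomp pi sg) = ptgt tgt pi.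
Proof.
rewrite /ptgt /Defs.pcomp /plen /= map_cat last_cat.
by case: pi.2.
Qed.

Lemma subpath_of_right P pi Y : valid src tgt pi -> valid src tgt P ->
  ptgt tgt pi = psrc P -> (0 < plen P)%N ->
  right_subpath src tgt (Defs.pcomp P pi) Y -> subpath src tgt P Y.
Proof.
move=> vpi vP hc hl [p2 [vp2 ht ->]]; exists pi, p2; split => //.
by rewrite -ht ptgt_comp.
Qed.
End Paths.

Section Soc.
Variables (V A : finType) (K : fieldType) (M : rep V A K).
Lemma socP y a : y \in socM M -> rarr M a y = 0.
Proof.
move=> ys; apply/eqP; rewrite -memv_ker; apply: (subvP _ _ ys).
exact: (bigcapv_inf a).
Qed.
Lemma socI y : (forall a, rarr M a y = 0) -> y \in socM M.
Proof.
move=> h; rewrite memvE; apply/subv_bigcapP => a _; rewrite -memvE memv_ker h //.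
Qed.
End Soc.

Lemma delta_sum (K : fieldType) (vT : lmodType K) (G : nat -> vT) a b k :
  \sum_(a <= l < b) (l == k)%:R *: G l = if (a <= k < b)%N then G k else 0.
Proof.
rewrite (eq_bigr (fun l => if l == k then G k else 0)); last first.
  by move=> l _; case: eqP => [->|_]; rewrite ?scale1r ?scale0r.
case: ifP => hk.
  rewrite (bigD1_seq k) ?mem_index_iota ?iota_uniq //= eqxx big1 ?addr0 //.
  by move=> l /negbTE ->.
rewrite big1_seq // => l /andP [_]; rewrite mem_index_iota => hl.
by case: eqP => // el; rewrite -el hl in hk.
Qed.
Theorem mainTheorem1
  (K : fieldType) (V A : finType) (src tgt : A -> V)
  (I : (qpath V A -> K) -> Prop) (C : rep V A K -> Prop)
  (r : nat) (e : nat -> V) (p q : nat -> qpath V A) :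
  admissible src tgt I ->
  (forall M, C M -> is_mod src tgt I M) ->
  (1 <= r)%N ->
  (* p_i, q_i : paths of positive length with common start e(i)',
     p_i ends in e(i), q_i ends in e(i+1) *)
  (forall i, (1 <= i <= r)%N ->
     [/\ valid src tgt (p i) /\ valid src tgt (q i), (0 < plen (p i))%N /\ (0 < plen (q i))%N,
         psrc (p i) = psrc (q i), ptgt tgt (p i) = e i
       & ptgt tgt (q i) = e (sidx r i.+1)]) ->
  (* none of the 2r paths is a subpath of another *)
  (forall k l, (1 <= k <= 2 * r)%N -> (1 <= l <= 2 * r)%N -> k <> l ->
     ~ subpath src tgt (pq_family r p q k) (pq_family r p q l)) ->
  (* condition (1) *)
  (forall n, (1 <= n)%N ->
     exists M, C M /\ exists x : nat -> rcar M,
       [/\ generated_by M (fun y => exists j, (1 <= j <= n * r)%N /\ y = x j),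
           (forall j, (1 <= j <= n * r)%N ->
              x j \notin radM M /\ reps M (psrc (p (sidx r j))) (x j) = x j),
           (forall c : nat -> K,
              \sum_(1 <= j < (n * r).+1) c j *: x j \in radM M ->
              forall j, (1 <= j <= n * r)%N -> c j = 0),
           (forall j, (1 <= j < n * r)%N ->
              ract M (q (sidx r j)) (x j) = ract M (p (sidx r j.+1)) (x j.+1))
         & (let y := fun j : nat => if j == 0%N then ract M (p (sidx r 1)) (x 1%N)
                                      else ract M (q (sidx r j)) (x j) in
                (forall j, (j < n * r)%N -> y j \in socM M) /\
                (forall c : nat -> K, \sum_(0 <= j < n * r) c j *: y j = 0 ->
                   forall j, (j < n * r)%N -> c j = 0)) /\
               (forall j, (1 <= j <= n * r)%N -> forall pth, valid src tgt pth ->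
                  ract M pth (x j) != 0 ->
                  right_subpath src tgt pth (p (sidx r j)) \/
                  ((j < n * r)%N /\ right_subpath src tgt pth (q (sidx r j))))]) ->
  (* condition (2) *)
  (forall B, C B ->
     [/\ (forall y, y \in socM B -> exists z, reps B (e 1%N) y = ract B (p 1%N) z),
         (forall i, (1 <= i <= r)%N -> forall z, ract B (q i) z \in socM B ->
            exists w, ract B (q i) z = ract B (p (sidx r i.+1)) w)
       & (forall i, (1 <= i <= r)%N -> forall z,
            ract B (p i) z \in socM B -> ract B (q i) z \in socM B)]) ->
  ~ has_left_approx C (simple_rep A K (e 1%N)).
Proof.
move=> adm modC r1 hpq nsub cond1 cond2 [X [f [CX homf univ]]].
pose d := \dim (fullv : {vspace rcar X}).
have [M [CM [x [gen xprops xindep qp [Hy annih]]]]] := cond1 d.+1 (ltn0Sn _).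
case: Hy => ysoc yindep.
set N := (d.+1 * r)%N in gen xprops xindep qp ysoc yindep annih.
have [idem orth _ arrM _] := modC M CM.
pose Y k := ract M (p (sidx r k)) (x k).
have s_rng : forall k, (1 <= sidx r k <= r)%N.
  by move=> k; rewrite /sidx ltnS ltn_pmod.
have s1 : sidx r 1 = 1%N by rewrite /sidx mod0n.
have sS : forall j, (1 <= j)%N -> sidx r (sidx r j).+1 = sidx r j.+1.
  by case=> // j _; rewrite /sidx /= -[(j %% r).+1]addn1 modnDml addn1.
have pqp : forall i, (i <= r)%N -> pq_family r p q i = p i.
  by move=> i hi; rewrite /pq_family hi.
have pqq : forall i, (1 <= i)%N -> pq_family r p q (i + r) = q i.
  by move=> i hi; rewrite /pq_family addnK; case: ifP => //; lia.
have yY : forall j, (j < N)%N -> (if j == 0%N then ract M (p (sidx r 1)) (x 1%N)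
          else ract M (q (sidx r j)) (x j)) = Y j.+1.
  case=> [|j] hj //=; rewrite qp //; lia.
have Ysoc : forall k, (1 <= k <= N)%N -> Y k \in socM M.
  case=> [|k] hk //; rewrite -yY; [exact: ysoc | lia].
have Yind : forall c : nat -> K, \sum_(1 <= k < N.+1) c k *: Y k = 0 ->
    forall k, (1 <= k <= N)%N -> c k = 0.
  move=> c hc [|k] hk //; apply: (yindep (fun j => c j.+1)); last lia.
  rewrite -[RHS]hc big_add1 /=; apply: eq_big_nat => j hj; rewrite yY //; lia.
have rcomp : forall pi sg w, ptgt tgt sg = psrc pi ->
    ract M pi (ract M sg w) = ract M (Defs.pcomp pi sg) w.
  by move=> *; apply: ract_comp.
have rnocomp : forall pi sg w, ptgt tgt sg != psrc pi -> ract M pi (ract M sg w) = 0.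
  by move=> *; apply: ract_nocomp.
pose P := fun w : rcar M => forall pi, valid src tgt pi -> forall i, (1 <= i <= r)%N ->
  exists lam : nat -> K, ract M (p i) (ract M pi w) = \sum_(1 <= k < N.+1) lam k *: Y k
    /\ ract M (q i) (ract M pi w) = \sum_(1 <= k < N) lam k *: Y k.+1.
have P0 : P 0.
  move=> pi _ i _; rewrite !ract0; exists (fun=> 0).
  by split; rewrite big1 // => l _; rewrite scale0r.
have Pc : forall a x y, P x -> P y -> P (a *: x + y).
  move=> a w1 w2 h1 h2 pi vpi i hi.
  have [l1 [e1 e2]] := h1 pi vpi i hi; have [l2 [e3 e4]] := h2 pi vpi i hi.
  exists (fun k => a * l1 k + l2 k); rewrite !ract_lin e1 e2 e3 e4 !scaler_sumr -!big_split.
  by split; apply: eq_bigr => k _; rewrite scalerDl scalerA.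
have PG : forall sg w, valid src tgt sg -> P w -> P (ract M sg w).
  move=> sg w vs Pw pi vpi i hi.
  case: (eqVneq (ptgt tgt sg) (psrc pi)) => hc.
    rewrite !(rcomp pi sg) //; apply: (Pw _ _ i hi); exact: valid_comp.
  rewrite !(rnocomp pi sg) // !ract0; exists (fun=> 0).
  by split; rewrite big1 // => l _; rewrite scale0r.
have Px : forall k, (1 <= k <= N)%N -> P (x k).
  move=> k hk pi vpi i hi.
  have [[vp vq] [lp lq] sq tp tq] := hpq i hi.
  have [_ xfix] := xprops k hk.
  have hsk := s_rng k.
  case: (eqVneq (ptgt tgt pi) (psrc (p i))) => hc; last first.
    rewrite (rnocomp (p i) pi) // (rnocomp (q i) pi) ?ract0; last by rewrite -sq.
    by exists (fun=> 0); split; rewrite big1 // => l _; rewrite scale0r.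
  have hcq : ptgt tgt pi = psrc (q i) by rewrite -sq.
  rewrite (rcomp (p i) pi) // (rcomp (q i) pi) //.
  have Ha : ract M (Defs.pcomp (p i) pi) (x k) != 0 -> i = sidx r k /\ plen pi = 0%N.
    move=> nz; have vc : valid src tgt (Defs.pcomp (p i) pi) by exact: valid_comp.
    case: (annih k hk _ vc nz) => [rs | [_ rs]].
      have sp := @subpath_of_right _ _ src tgt _ _ _ vpi vp hc lp rs.
      have ei : i = sidx r k.
        apply/eqP; apply/negPn/negP => /eqP ne.
        apply: (nsub i (sidx r k)) => //; [lia | lia |].
        by rewrite !pqp //; lia.
      split => //; move: rs => [p2 [_ _ E]]; rewrite -ei in E.
      have := congr1 (fun t : qpath V A => size t.2) E.
      rewrite /= !size_cat /plen; lia.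
    have sp := @subpath_of_right _ _ src tgt _ _ _ vpi vp hc lp rs.
    exfalso; apply: (nsub i (sidx r k + r)) => //; [lia | lia | lia |].
    rewrite (pqp i) ?(pqq (sidx r k)) //; lia.
  have Hb : ract M (Defs.pcomp (q i) pi) (x k) != 0 ->
      [/\ i = sidx r k, plen pi = 0%N & (k < N)%N].
    move=> nz; have vc : valid src tgt (Defs.pcomp (q i) pi) by exact: valid_comp.
    case: (annih k hk _ vc nz) => [rs | [kN rs]].
      have sp := @subpath_of_right _ _ src tgt _ _ _ vpi vq hcq lq rs.
      exfalso; apply: (nsub (i + r) (sidx r k)) => //; [lia | lia | lia |].
      rewrite (pqq i) ?(pqp (sidx r k)) //; lia.
    have sp := @subpath_of_right _ _ src tgt _ _ _ vpi vq hcq lq rs.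
    have ei : i = sidx r k.
      apply/eqP; apply/negPn/negP => /eqP ne.
      apply: (nsub (i + r) (sidx r k + r)) => //; [lia | lia | lia |].
      by rewrite !pqq //; lia.
    split => //; move: rs => [p2 [_ _ E]]; rewrite -ei in E.
    have := congr1 (fun t : qpath V A => size t.2) E.
    rewrite /= !size_cat /plen; lia.
  case: (boolP ((i == sidx r k) && (plen pi == 0%N))) => [/andP [/eqP ei /eqP l0] | hne].
    have epi : Defs.pcomp (p i) pi = p i.
      move: hc l0; case: pi {vpi Ha Hb hcq} => v s h1 h2; move: h1; have -> : s = [::] by apply: size0nil.
      by rewrite /ptgt /psrc /Defs.pcomp /= => ->; case: (p i).
    have epq : Defs.pcomp (q i) pi = q i.
      move: hcq l0; case: pi {vpi Ha Hb hc epi} => v s h1 h2; move: h1; have -> : s = [::] by apply: size0nil.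
      by rewrite /ptgt /psrc /Defs.pcomp /= => ->; case: (q i).
    have q0 : (N <= k)%N -> ract M (Defs.pcomp (q i) pi) (x k) = 0.
      move=> kN; apply/eqP; apply/negPn/negP => /Hb [_ _]; lia.
    exists (fun l => (l == k)%:R); rewrite !delta_sum.
    rewrite (_ : (1 <= k < N.+1)%N = true); last by lia.
    split; first by rewrite epi /Y ei.
    have k1 : (1 <= k)%N by lia.
    rewrite k1 /=; case: ifP => kN.
      by rewrite epq ei qp //; lia.
    apply: q0; lia.
  have z1 : ract M (Defs.pcomp (p i) pi) (x k) = 0.
    apply/eqP; apply/negPn/negP => /Ha [e1 e2].
    by rewrite e1 e2 !eqxx in hne.
  have z2 : ract M (Defs.pcomp (q i) pi) (x k) = 0.
    apply/eqP; apply/negPn/negP => /Hb [e1 e2 _].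
    by rewrite e1 e2 !eqxx in hne.
  rewrite z1 z2; exists (fun=> 0).
  by split; rewrite big1 // => l _; rewrite scale0r.
have [U hU] := @vspace_of_pred _ _ P P0 Pc.
have UF : U = fullv.
  apply: gen.
  - move=> v; apply/subvP => y /memv_imgP [w /hU wU ->]; apply/hU.
    rewrite reps_ract; exact: PG.
  - move=> a; apply/subvP => y /memv_imgP [w /hU wU ->]; apply/hU.
    rewrite (@rarr_ract _ _ src tgt _ M idem arrM); apply: PG => //; by rewrite /valid /= eqxx.
  - by move=> y [j [hj ->]]; apply/hU; apply: Px.
have Pall : forall w, P w by move=> w; apply/hU; rewrite UF memvf.
have step : forall w j, (1 <= j < N)%N -> ract M (p (sidx r j)) w = Y j ->
    ract M (q (sidx r j)) w = Y j.+1.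
  move=> w j hj hpw.
  have hi := s_rng j.
  have [[vp vq] _ sq _ _] := hpq _ hi.
  have [lam [e1 e2]] := Pall w (psrc (p (sidx r j)), [::]) isT _ hi.
  rewrite rcomp // in e1; rewrite rcomp in e2; last exact: sq.
  have E1 : Defs.pcomp (p (sidx r j)) (psrc (p (sidx r j)), [::]) = p (sidx r j).
    by case: (p (sidx r j)).
  have E2 : Defs.pcomp (q (sidx r j)) (psrc (p (sidx r j)), [::]) = q (sidx r j).
    by rewrite sq; case: (q (sidx r j)).
  rewrite E1 in e1; rewrite E2 in e2.
  have lamE : forall l, (1 <= l <= N)%N -> lam l = (l == j)%:R.
    move=> l hl; apply/eqP; rewrite -subr_eq0; apply/eqP.
    apply: (Yind (fun l => lam l - (l == j)%:R)) => //.
    under eq_bigr do rewrite scalerBl.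
    rewrite sumrB -e1 delta_sum (_ : (1 <= j < N.+1)%N = true) ?hpw ?subrr //; lia.
  rewrite e2; transitivity (\sum_(1 <= l < N) (l == j)%:R *: Y l.+1).
    by apply: eq_big_nat => l hl; rewrite lamE //; lia.
  by rewrite delta_sum (_ : (1 <= j < N)%N = true) //; lia.
have h1r : (1 <= 1 <= r)%N by lia.
have [_ _ _ tp1 _] := hpq 1%N h1r.
have Y1 : Y 1%N = ract M (p 1%N) (x 1%N) by rewrite /Y s1.
have Y1s : Y 1%N \in socM M by apply: Ysoc; lia.
pose gf := fun c : K^o => c *: Y 1%N.
have lin_g : linear gf by move=> a u v; rewrite /gf scalerDl scalerA.
pose gL : {linear K^o -> rcar M} := HB.pack gf (GRing.isLinear.Build _ _ _ _ gf lin_g).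
pose g : 'Hom(rcar (simple_rep A K (e 1%N)), rcar M) := linfun gL.
have gE : forall c, g c = c *: Y 1%N by move=> c; rewrite /g lfunE.
have homg : is_hom g.
  split.
  - move=> v c; rewrite !gE linearZ /=.
    case: (eqVneq v (e 1%N)) => [->|ne].
      by rewrite id_lfunE Y1 -tp1 (@reps_tgt _ _ src tgt _ M idem arrM).
    rewrite zero_lfunE scale0r Y1 (@reps_other _ _ src tgt _ M idem orth arrM) ?tp1 //.
    by rewrite scaler0.
  - by move=> a c; rewrite !gE /= zero_lfunE scale0r linearZ /= socP // scaler0.
have [h [homh hg]] := univ M CM g homg.
have [hf1 hf2] := homf.
pose u := f (1 : K^o).
have hu : h u = Y 1%N by rewrite /u -hg gE scale1r.
have usoc : u \in socM X.
  by apply: socI => a; rewrite /u -hf2 /= zero_lfunE linear0.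
have ue : reps X (e 1%N) u = u by rewrite /u -hf1 /= eqxx id_lfunE.
have hr : forall pth y, h (ract X pth y) = ract M pth (h y).
  by move=> pth y; apply: hom_ract.
have [c1 c2 c3] := cond2 X CX.
have chain : forall j, (1 <= j <= N)%N -> exists z,
    ract X (p (sidx r j)) z \in socM X /\ h (ract X (p (sidx r j)) z) = Y j.
  elim=> [|j IH] hj //.
  case: (posnP j) => [j0|jpos].
    subst j; have [z ez] := c1 u usoc.
    by exists z; rewrite s1 -ez ue.
  have [z [zs zh]] := IH (ltac:(lia)).
  have hi := s_rng j.
  have qs := c3 _ hi z zs.
  have [w ew] := c2 _ hi z qs.
  rewrite sS // in ew.
  exists w; rewrite -ew; split => //.
  rewrite hr; apply: step; first lia.
  by rewrite -hr.
have inimg : forall k, (1 <= k <= N)%N -> Y k \in limg h.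
  by move=> k hk; have [z [_ hz]] := chain k hk; rewrite -hz memv_img ?memvf.
pose T := [tuple Y i.+1 | i < N].
have TE : forall i : 'I_N, T`_i = Y i.+1.
  by move=> i; rewrite nth_mktuple.
have fT : free T.
  apply/freeP => c hc i.
  pose c' := fun l => c (insubd i l.-1).
  have := Yind c'.
  have -> : \sum_(1 <= k < N.+1) c' k *: Y k = 0.
    rewrite big_add1 /= -[RHS]hc big_mkord; apply: eq_bigr => j _.
    by rewrite TE /c' /= valKd.
  move=> /(_ erefl i.+1) H; rewrite -H; [by rewrite /c' /= valKd | have := ltn_ord i; lia].
have sub : (<<T>> <= limg h)%VS.
  apply/span_subvP => y /tnthP [i ->]; rewrite tnth_mktuple; apply: inimg; have := ltn_ord i; lia.
have := dimvS sub; rewrite (eqP fT) size_tuple.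
have := limg_ker_dim h fullv.
have : (d.+1 <= N)%N by rewrite /N leq_pmulr.
rewrite /d; lia.
Qed.
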